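(* Let $R$ be a separative exchange ring in which $2$ is invertible, and let $a\in R$ be such that $a-a^3$ is regular. If $R(1-a^2)R=Rr(a)\cap \ell(a)R$, then $a$ is unit-regular.
   Context: All rings are associative with identity; modules are right modules. An element $x\in R$ is regular if $x=xyx$ for some $y\in R$, and unit-regular if $x=xux$ for some unit $u\in R$. $R$ is an exchange ring if for every $x\in R$ there is an idempotent $e\in xR$ with $1-e\in(1-x)R$. $R$ is separative if for all finitely generated projective right $R$-modules $A,B$: $A\oplus A\cong A\oplus B\cong B\oplus B$ implies $A\cong B$. $r(a)=\{x\in R: ax=0\}$, $\ell(a)=\{x\in R: xa=0\}$; $Rr(a)$, $\ell(a)R$, $R(1-a^2)R$ denote the two-sided ideals generated by $r(a)$, $\ell(a)$, $1-a^2$ respectively. *)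

(* Defs.v *)
(* Rings: R : pzRingType (associative, with 1, possibly zero).
   Right R-modules are encoded as left modules over the converse ring R^c
   (the scalar action  a *: m  stands for  m . a). *)
From mathcomp Require Import all_boot all_algebra.
Import GRing.Theory.
Set Implicit Arguments. Unset Strict Implicit. Unset Printing Implicit Defensive.
Local Open Scope ring_scope.

Section RingDefs.
Variable R : pzRingType.

Definition regular (x : R) : Prop := exists y : R, x = x * y * x.

Definition is_unit (u : R) : Prop := exists v : R, u * v = 1 /\ v * u = 1.

Definition unit_regular (x : R) : Prop :=
  exists u : R, is_unit u /\ x = x * u * x.

Definition exchange_ring : Prop :=
  forall x : R, exists e : R, e * e = e /\ (exists r, e = x * r)
                          /\ (exists s, 1 - e = (1 - x) * s).

Definition rann (a : R) : R -> Prop := fun x => a * x = 0.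
Definition lann (a : R) : R -> Prop := fun x => x * a = 0.

Definition ideal_gen (S : R -> Prop) : R -> Prop :=
  fun z => exists (n : nat) (x t y : 'I_n -> R),
    (forall i, S (t i)) /\ z = \sum_(i < n) x i * t i * y i.

End RingDefs.

Section ModDefs.
Variable R : pzRingType.

Definition rlinear (M N : lmodType R^c) (f : M -> N) : Prop :=
  forall (a : R^c) (x y : M), f (a *: x + y) = a *: f x + f y.

Definition mod_iso (M N : lmodType R^c) : Prop :=
  exists (f : M -> N) (g : N -> M),
    rlinear f /\ rlinear g /\ cancel f g /\ cancel g f.

Definition fg_projective (M : lmodType R^c) : Prop :=
  exists (n : nat) (f : M -> 'rV[R^c]_n) (g : 'rV[R^c]_n -> M),
    rlinear f /\ rlinear g /\ cancel f g.

Definition separative : Prop :=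
  forall A B : lmodType R^c, fg_projective A -> fg_projective B ->
    mod_iso (A * A)%type (A * B)%type -> mod_iso (A * B)%type (B * B)%type ->
    mod_iso A B.

End ModDefs.

(* Main.v *)
From HB Require Import structures.
Require Import Defs.
From mathcomp Require Import all_boot all_algebra.
Import GRing.Theory.
Set Implicit Arguments. Unset Strict Implicit. Unset Printing Implicit Defensive.
Local Open Scope ring_scope.


Section Mods.
Variable R : pzRingType.
Implicit Types A B C D : lmodType R^c.

Lemma iso_refl A : mod_iso A A.
Proof. by exists id, id; do 2 split => //. Qed.

Lemma iso_sym A B : mod_iso A B -> mod_iso B A.
Proof. by case=> f [g [lf [lg [fg gf]]]]; exists g, f. Qed.

Lemma iso_trans A B C : mod_iso A B -> mod_iso B C -> mod_iso A C.
Proof.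
case=> f [g [lf [lg [fg gf]]]] [f' [g' [lf' [lg' [fg' gf']]]]].
exists (f' \o f), (g \o g'); split; [|split; [|split]].
- by move=> a x y /=; rewrite lf lf'.
- by move=> a x y /=; rewrite lg' lg.
- by move=> x /=; rewrite fg' fg.
- by move=> x /=; rewrite gf gf'.
Qed.

Lemma iso_prod A A' B B' : mod_iso A A' -> mod_iso B B' ->
  mod_iso (A * B)%type (A' * B')%type.
Proof.
case=> f [g [lf [lg [fg gf]]]] [f' [g' [lf' [lg' [fg' gf']]]]].
exists (fun p => (f p.1, f' p.2)), (fun p => (g p.1, g' p.2)); split; [|split; [|split]].
- by move=> a [x1 x2] [y1 y2] /=; rewrite lf lf'.
- by move=> a [x1 x2] [y1 y2] /=; rewrite lg lg'.
- by move=> [x1 x2] /=; rewrite fg fg'.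
- by move=> [x1 x2] /=; rewrite gf gf'.
Qed.

Lemma iso_comm A B : mod_iso (A * B)%type (B * A)%type.
Proof.
exists (fun p => (p.2, p.1)), (fun p => (p.2, p.1)); split; [|split; [|split]].
- by move=> a [x1 x2] [y1 y2].
- by move=> a [x1 x2] [y1 y2].
- by case.
- by case.
Qed.

Lemma iso_assoc A B C : mod_iso ((A * B) * C)%type (A * (B * C))%type.
Proof.
exists (fun p => (p.1.1, (p.1.2, p.2))), (fun p => ((p.1, p.2.1), p.2.2)); split; [|split; [|split]].
- by move=> a [[x1 x2] x3] [[y1 y2] y3].
- by move=> a [x1 [x2 x3]] [y1 [y2 y3]].
- by case=> [[]].
- by case=> ? [].
Qed.


Section Lin.
Variables (M N : lmodType R^c) (f : M -> N).
Hypothesis lf : rlinear f.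
Lemma linD x y : f (x + y) = f x + f y.
Proof. by have := lf 1 x y; rewrite !scale1r. Qed.
Lemma lin0 : f 0 = 0.
Proof. by apply: (addrI (f 0)); rewrite addr0 -linD addr0. Qed.
Lemma linZ a x : f (a *: x) = a *: f x.
Proof. by have := lf a x 0; rewrite !addr0 lin0 addr0. Qed.
Lemma linN x : f (- x) = - f x.
Proof. by rewrite -scaleN1r linZ scaleN1r. Qed.
Lemma linB x y : f (x - y) = f x - f y.
Proof. by rewrite linD linN. Qed.
End Lin.

Definition retr (X Y : lmodType R^c) : Prop :=
  exists (s : X -> Y) (p : Y -> X), rlinear s /\ rlinear p /\ cancel s p.

Lemma iso_retr A B : mod_iso A B -> retr A B.
Proof. by case=> f [g [lf [lg [fg gf]]]]; exists f, g. Qed.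

Lemma retr_trans A B C : retr A B -> retr B C -> retr A C.
Proof.
case=> f [g [lf [lg fg]]] [f' [g' [lf' [lg' fg']]]].
exists (f' \o f), (g \o g'); split; [|split].
- by move=> a x y /=; rewrite lf lf'.
- by move=> a x y /=; rewrite lg' lg.
- by move=> x /=; rewrite fg' fg.
Qed.

Lemma fgp_retr A B : retr A B -> fg_projective B -> fg_projective A.
Proof.
case=> f [g [lf [lg fg]]] [n [f' [g' [lf' [lg' fg']]]]].
exists n, (f' \o f), (g \o g'); split; [|split].
- by move=> a x y /=; rewrite lf lf'.
- by move=> a x y /=; rewrite lg' lg.
- by move=> x /=; rewrite fg' fg.
Qed.

Lemma fgp_iso A B : mod_iso A B -> fg_projective B -> fg_projective A.
Proof. by move=> /iso_retr; apply: fgp_retr. Qed.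

Lemma fgp_prod A B : fg_projective A -> fg_projective B -> fg_projective (A * B)%type.
Proof.
case=> n [f [g [lf [lg fg]]]] [n' [f' [g' [lf' [lg' fg']]]]].
exists (n + n')%N, (fun p => row_mx (f p.1) (f' p.2)),
  (fun v => (g (lsubmx v), g' (rsubmx v))); split; [|split].
- move=> a [x1 x2] [y1 y2] /=; rewrite lf lf'; apply/matrixP => i j; rewrite !mxE; by case: splitP => k _; rewrite !mxE.
- move=> a v w /=.
  have -> : lsubmx (a *: v + w) = a *: lsubmx v + lsubmx w.
    by apply/matrixP => i j; rewrite !mxE.
  have -> : rsubmx (a *: v + w) = a *: rsubmx v + rsubmx w.
    by apply/matrixP => i j; rewrite !mxE.
  by rewrite lg lg'.
- by move=> [x1 x2] /=; rewrite row_mxKl row_mxKr fg fg'.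
Qed.

Fixpoint pw (A : lmodType R^c) (m : nat) : lmodType R^c :=
  match m with 0 => A | m'.+1 => (A * pw A m')%type end.

Lemma fgp_pw A m : fg_projective A -> fg_projective (pw A m).
Proof. by move=> hA; elim: m => //= m IH; apply: fgp_prod. Qed.

Definition M0 : lmodType R^c := R^c^o.

Lemma fgp_M0 : fg_projective M0.
Proof.
exists 1%N, (fun x : M0 => \row_(j < 1) (x : R^c)), (fun v => (v 0 0 : M0)); split; [|split].
- by move=> a x y; apply/rowP => j; rewrite !mxE.
- by move=> a v w; rewrite !mxE.
- by move=> x; rewrite mxE.
Qed.

Section Im.
Variables (M : lmodType R^c) (phi : M -> M).
Hypothesis philin : rlinear phi.
Definition Sp : {pred M} := fun x => phi x == x.
Lemma Sp_closed : GRing.submod_closed Sp.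
Proof.
split; first by rewrite /Sp unfold_in /= (lin0 philin).
move=> a u v; rewrite !unfold_in /= /Sp => /eqP hu /eqP hv.
by rewrite philin hu hv.
Qed.
HB.instance Definition _ := GRing.isSubmodClosed.Build R^c M Sp Sp_closed.
Definition ImT : Type := (fun _ : rlinear phi => {x : M | x \in Sp}) philin.
HB.instance Definition _ := [isSub of ImT for @sval M (fun x => x \in Sp)].
HB.instance Definition _ := [Choice of ImT by <:].
HB.instance Definition _ := [SubChoice_isSubLmodule of ImT by <:].

Lemma valImP (x : ImT) : phi (val x) = val x.
Proof. by apply/eqP; case: x. Qed.

Lemma val_lin : rlinear (fun x : ImT => val x).
Proof. by move=> a x y. Qed.

Hypothesis phiid : forall x, phi (phi x) = phi x.
Lemma toIm_subproof y : phi y \in Sp.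
Proof. by rewrite unfold_in /Sp /= phiid. Qed.
Definition toIm (y : M) : ImT := exist _ (phi y) (toIm_subproof y).
Lemma toIm_lin : rlinear toIm.
Proof. by move=> a x y; apply: val_inj => /=; rewrite philin. Qed.
Lemma toImK (x : ImT) : toIm (val x) = x.
Proof. by apply: val_inj => /=; rewrite valImP. Qed.
Lemma retr_Im : retr ImT M.
Proof. by exists val, toIm; split; [exact: val_lin|split; [exact: toIm_lin|exact: toImK]]. Qed.
End Im.

Section Compl.
Variables (X Y : lmodType R^c) (s : X -> Y) (p : Y -> X).
Hypotheses (ls : rlinear s) (lp : rlinear p) (sp : cancel s p).
Definition phiC (y : Y) := y - s (p y).
Lemma phiC_lin : rlinear phiC.
Proof.
move=> a x y; rewrite /phiC lp ls scalerBr opprD !addrA; congr (_ - _).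
by rewrite -!addrA; congr (_ + _); rewrite addrC.
Qed.
Lemma phiC_id y : phiC (phiC y) = phiC y.
Proof. by rewrite /phiC (linB lp) sp subrr (lin0 ls) subr0. Qed.
Lemma iso_compl : mod_iso Y (X * ImT phiC_lin)%type.
Proof.
exists (fun y => (p y, toIm phiC_lin phiC_id y)), (fun q => s q.1 + val q.2); split; [|split; [|split]].
- by move=> a x y; rewrite lp (toIm_lin phiC_lin phiC_id).
- by move=> a [x1 x2] [y1 y2] /=; rewrite ls scalerDr !addrA; congr (_ + _);
     rewrite -!addrA; congr (_ + _); rewrite addrC.
- by move=> y /=; rewrite /phiC addrC subrK.
- move=> [x z] /=; have hz := valImP z; have pz : p (val z) = 0.
    by rewrite -hz /phiC (linB lp) sp subrr.
  congr (_, _); first by rewrite (linD lp) sp pz addr0.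
  by apply: val_inj => /=; rewrite /phiC (linD lp) sp pz addr0 addrC addKr.
Qed.
Lemma fgp_compl : fg_projective Y -> fg_projective (ImT phiC_lin).
Proof. by apply: fgp_retr; apply: retr_Im phiC_lin phiC_id. Qed.
End Compl.


Section Canc.
Hypothesis sepR : separative R.

Lemma L1 (P V Z W : lmodType R^c) :
  mod_iso (P * ((V * Z) * W))%type ((P * (V * W)) * Z)%type.
Proof.
exists (fun q => ((q.1, (q.2.1.1, q.2.2)), q.2.1.2)),
  (fun q => (q.1.1, ((q.1.2.1, q.2), q.1.2.2))); split; [|split; [|split]].
- by move=> a [x1 [[x2 x3] x4]] [y1 [[y2 y3] y4]].
- by move=> a [[x1 [x2 x3]] x4] [[y1 [y2 y3]] y4].
- by move=> [x1 [[x2 x3] x4]].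
- by move=> [[x1 [x2 x3]] x4].
Qed.

Lemma L2 (P Q X : lmodType R^c) :
  mod_iso ((P * X) * (Q * X))%type ((Q * (P * X)) * X)%type.
Proof.
exists (fun q => ((q.2.1, (q.1.1, q.1.2)), q.2.2)),
  (fun q => ((q.1.2.1, q.1.2.2), (q.1.1, q.2))); split; [|split; [|split]].
- by move=> a [[x1 x2] [x3 x4]] [[y1 y2] [y3 y4]].
- by move=> a [[x1 [x2 x3]] x4] [[y1 [y2 y3]] y4].
- by move=> [[x1 x2] [x3 x4]].
- by move=> [[x1 [x2 x3]] x4].
Qed.

Lemma L3 (P Q X : lmodType R^c) :
  mod_iso ((P * X) * (Q * X))%type (Q * (P * (X * X)))%type.
Proof.
exists (fun q => (q.2.1, (q.1.1, (q.1.2, q.2.2)))),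
  (fun q => ((q.2.1, q.2.2.1), (q.1, q.2.2.2))); split; [|split; [|split]].
- by move=> a [[x1 x2] [x3 x4]] [[y1 y2] [y3 y4]].
- by move=> a [x1 [x2 [x3 x4]]] [y1 [y2 [y3 y4]]].
- by move=> [[x1 x2] [x3 x4]].
- by move=> [x1 [x2 [x3 x4]]].
Qed.

Lemma L4 (P C D : lmodType R^c) :
  mod_iso (P * (C * D))%type ((P * C) * D)%type.
Proof. exact: iso_sym (iso_assoc _ _ _). Qed.

Lemma addX (A P Q : lmodType R^c) m :
  mod_iso (P * (A * pw A m))%type (Q * (A * pw A m))%type ->
  mod_iso (P * (pw A m * pw A m))%type (Q * (pw A m * pw A m))%type.
Proof.
case: m => [|k] h; first exact: h.
apply: iso_trans (L1 _ _ _ _) _.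
apply: iso_trans (iso_sym (L1 _ _ _ _)).
exact: iso_prod h (iso_refl _).
Qed.

Lemma descend (V W : lmodType R^c) (fV : fg_projective V) (fW : fg_projective W) m :
  mod_iso (V * pw V m)%type (W * pw V m)%type -> mod_iso (V * V)%type (W * V)%type.
Proof.
elim: m => [//|m IH] /= h; apply: IH.
have fX := fgp_pw m fV.
have T := addX h.
apply: sepR; try exact: fgp_prod.
- apply: iso_trans (L2 _ _ _) _.
  apply: (iso_trans _ (iso_sym (L2 _ _ _))).
  exact: iso_prod h (iso_refl _).
- apply: iso_trans (L3 _ _ _) _.
  apply: (iso_trans _ (iso_sym (L3 _ _ _))).
  exact: iso_prod (iso_refl _) T.
Qed.

Lemma side (V W C : lmodType R^c) (fV : fg_projective V) (fW : fg_projective W) m :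
  mod_iso (V * C)%type (W * C)%type -> retr C (pw V m) -> mod_iso (V * V)%type (W * V)%type.
Proof.
move=> h [s [p [ls [lp sp]]]].
have hc := iso_compl ls lp sp.
apply: (descend fV fW (m := m)).
apply: iso_trans (iso_prod (iso_refl _) hc) _.
apply: iso_trans (L4 _ _ _) _.
apply: iso_trans (iso_prod h (iso_refl _)) _.
apply: iso_trans (iso_assoc _ _ _) _.
exact: iso_prod (iso_refl _) (iso_sym hc).
Qed.

Lemma canc (A B C : lmodType R^c) m m' : fg_projective A -> fg_projective B ->
  mod_iso (A * C)%type (B * C)%type -> retr C (pw A m) -> retr C (pw B m') ->
  mod_iso A B.
Proof.
move=> fA fB h r1 r2.
have h1 := side fA fB h r1.
have h2 := side fB fA (iso_sym h) r2.
apply: sepR => //.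
- exact: iso_trans h1 (iso_comm _ _).
- exact: iso_sym h2.
Qed.

End Canc.

Section PEsec.
Definition Lm (c : R) (x : M0) : M0 := (c * (x : R) : R).
Lemma Lm_lin c : rlinear (Lm c).
Proof. by move=> a x y; rewrite /Lm /= mulrDr mulrA. Qed.
Definition PE (e : R) := ImT (Lm_lin e).
Definition idem (e : R) := e * e = e.
Lemma Lm_id e : idem e -> forall x, Lm e (Lm e x) = Lm e x.
Proof. by move=> he x; rewrite /Lm mulrA he. Qed.

Lemma PEP e (v : PE e) : e * (val v : R) = val v.
Proof. exact: (valImP v). Qed.

Lemma mkPE_subproof e (z : R) : e * z = z -> (z : M0) \in Sp (Lm e).
Proof. by move=> h; rewrite unfold_in /Sp /Lm /= h. Qed.
Definition mkPE e (z : R) (h : e * z = z) : PE e := exist _ (z : M0) (mkPE_subproof h).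

Lemma fgp_PE e : idem e -> fg_projective (PE e).
Proof. move=> he; apply: fgp_retr fgp_M0; exact: retr_Im (Lm_id he). Qed.

Lemma valZ e (a : R^c) (v : PE e) : (val (a *: v) : R) = (val v : R) * (a : R).
Proof. by []. Qed.
Lemma valD e (v w : PE e) : (val (v + w) : R) = (val v : R) + val w.
Proof. by []. Qed.

Lemma iso_equiv e1 e2 x y : idem e1 -> idem e2 ->
  e2 * x = x -> x * e1 = x -> e1 * y = y -> y * e2 = y -> y * x = e1 -> x * y = e2 ->
  mod_iso (PE e1) (PE e2).
Proof.
move=> h1 h2 hx1 hx2 hy1 hy2 hyx hxy.
have P1 (v : PE e1) : e2 * (x * val v) = x * val v by rewrite mulrA hx1.
have P2 (v : PE e2) : e1 * (y * val v) = y * val v by rewrite mulrA hy1.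
exists (fun v => mkPE (P1 v)), (fun v => mkPE (P2 v)); split; [|split; [|split]].
- by move=> a u v; apply: val_inj => /=; rewrite mulrDr mulrA.
- by move=> a u v; apply: val_inj => /=; rewrite mulrDr mulrA.
- by move=> v; apply: val_inj => /=; rewrite mulrA hyx PEP.
- by move=> v; apply: val_inj => /=; rewrite mulrA hxy PEP.
Qed.

Lemma iso_extract e1 e2 : idem e1 -> idem e2 -> mod_iso (PE e1) (PE e2) ->
  exists x y, e2 * x = x /\ x * e1 = x /\ e1 * y = y /\ y * e2 = y /\ y * x = e1 /\ x * y = e2.
Proof.
move=> h1 h2 [f [g [lf [lg [fg gf]]]]].
set E1 : PE e1 := mkPE h1; set E2 : PE e2 := mkPE h2.
exists (val (f E1) : R), (val (g E2) : R).
have S1 (v : PE e1) : v = (val v : R^c) *: E1.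
  by apply: val_inj; rewrite valZ /= PEP.
have S2 (v : PE e2) : v = (val v : R^c) *: E2.
  by apply: val_inj; rewrite valZ /= PEP.
have EE1 : (e1 : R^c) *: E1 = E1 by apply: val_inj; rewrite valZ /= h1.
have EE2 : (e2 : R^c) *: E2 = E2 by apply: val_inj; rewrite valZ /= h2.
have xe1 : (val (f E1) : R) * e1 = val (f E1).
  by rewrite -valZ -(linZ lf) EE1.
have ye2 : (val (g E2) : R) * e2 = val (g E2).
  by rewrite -valZ -(linZ lg) EE2.
split; first exact: PEP.
split => //; split; first exact: PEP.
split => //; split.
- by rewrite -valZ -(linZ lg) -S2 fg.
- by rewrite -valZ -(linZ lf) -S1 gf.
Qed.

Lemma iso_orth f e : idem f -> idem e -> f * e = e -> e * f = e ->
  mod_iso (PE f) (PE e * PE (f - e))%type.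
Proof.
move=> hf he hfe hef.
have hfe' : idem (f - e).
  by rewrite /idem mulrBr !mulrBl hf hfe hef he subrr subr0.
have P1 (v : PE e * PE (f - e)) : f * ((val v.1 : R) + val v.2) = (val v.1 : R) + val v.2.
  rewrite mulrDr -{1}(PEP v.1) -{1}(PEP v.2) !mulrA hfe mulrBr hf hfe PEP.
  by rewrite -{2}(PEP v.2).
exists (fun v => (toIm (Lm_lin e) (Lm_id he) (val v), toIm (Lm_lin (f - e)) (Lm_id hfe') (val v))),
  (fun v => mkPE (P1 v)); split; [|split; [|split]].
- move=> a u v; congr (_, _); apply: val_inj => /=; rewrite /Lm /=;
  by rewrite mulrDr mulrA.
- by move=> a [u1 u2] [v1 v2]; apply: val_inj => /=; rewrite scalerDr addrACA.
- by move=> v; apply: val_inj => /=; rewrite /Lm /= -mulrDl addrC subrK PEP.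
- move=> [u v]; congr (_, _); apply: val_inj => /=; rewrite /Lm /= mulrDr.
  + rewrite -{1}(PEP u) -{1}(PEP v) !mulrA he mulrBr hef he subrr mul0r addr0.
    by rewrite PEP.
  + rewrite -{1}(PEP u) -{1}(PEP v) !mulrA mulrBl hfe he subrr mul0r add0r.
    by rewrite hfe' PEP.
Qed.


Lemma pw_aux n (hn : idem n) k (x y : 'I_k -> R) :
  exists m (s : M0 -> pw (PE n) m) (p : pw (PE n) m -> M0),
    rlinear s /\ rlinear p /\ forall r : M0, (p (s r) : R) = (\sum_(i < k) x i * n * y i) * (r : R).
Proof.
elim: k x y => [|k IH] x y.
  exists 0%N, (fun _ => 0), (fun _ => 0); split; [|split].
  - by move=> a u v; rewrite scaler0 addr0.
  - by move=> a u v; rewrite scaler0 addr0.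
  - by move=> r; rewrite big_ord0 mul0r.
have [m [s [p [ls [lp sp]]]]] := IH (fun i => x (widen_ord (leqnSn k) i))
                                    (fun i => y (widen_ord (leqnSn k) i)).
exists m.+1, (fun r => (toIm (Lm_lin n) (Lm_id hn) (Lm (y ord_max) r), s r)),
  (fun q => Lm (x ord_max) (val q.1) + p q.2); split; [|split].
- move=> a u v /=; congr (_, _); last exact: ls.
  by rewrite (Lm_lin (y ord_max)) (toIm_lin (Lm_lin n) (Lm_id hn)).
- move=> a [u1 u2] [v1 v2] /=; rewrite lp (Lm_lin (x ord_max)) /=.
  by rewrite scalerDr addrACA.
- move=> r /=; rewrite sp big_ord_recr /= mulrDl addrC /Lm /= !mulrA.
  by [].
Qed.

Lemma pw_retr n f k (x y : 'I_k -> R) : idem n -> idem f ->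
  f = \sum_(i < k) x i * n * y i -> exists m, retr (PE f) (pw (PE n) m).
Proof.
move=> hn hf hsum.
have [m [s [p [ls [lp sp]]]]] := pw_aux hn x y.
exists m, (fun v => s (val v)), (fun w => toIm (Lm_lin f) (Lm_id hf) (p w)); split; [|split].
- by move=> a u v; rewrite -ls.
- by move=> a u v; rewrite lp (toIm_lin (Lm_lin f) (Lm_id hf)).
- move=> v; apply: val_inj => /=; rewrite /Lm /= sp -hsum mulrA hf.
  exact: PEP.
Qed.


Lemma retr_fst (X Y : lmodType R^c) : retr X (X * Y)%type.
Proof.
exists (fun x => (x, 0)), (fun q => q.1); split; [|split] => //.
move=> a u v /=.
by change ((a *: u + v, 0 : Y) = (a *: u + v, a *: (0 : Y) + 0)); rewrite scaler0 addr0.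
Qed.

Lemma idem_sub f e : idem f -> idem e -> f * e = e -> e * f = e -> idem (f - e).
Proof. by move=> hf he hfe hef; rewrite /idem mulrBr !mulrBl hf hfe hef he subrr subr0. Qed.

Lemma key (sepR : separative R) f c g k k' (x y : 'I_k -> R) (x' y' : 'I_k' -> R) :
  idem f -> f * c = c -> c * f = c -> f * g = g -> g * f = g ->
  c * g * c = c -> g * c * g = g ->
  f = \sum_(i < k) x i * (f - g * c) * y i ->
  f = \sum_(i < k') x' i * (f - c * g) * y' i ->
  exists u v, (f - c * g) * u = u /\ u * (f - g * c) = u /\ (f - g * c) * v = v /\
     v * (f - c * g) = v /\ v * u = f - g * c /\ u * v = f - c * g.
Proof.
move=> hf hfc hcf hfg hgf hcgc hgcg s1 s2.
have he1 : idem (g * c) by rewrite /idem mulrA hgcg.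
have he2 : idem (c * g) by rewrite /idem mulrA hcgc.
have f1 : f * (g * c) = g * c by rewrite mulrA hfg.
have f1' : (g * c) * f = g * c by rewrite -mulrA hcf.
have f2 : f * (c * g) = c * g by rewrite mulrA hfc.
have f2' : (c * g) * f = c * g by rewrite -mulrA hgf.
have hn1 := idem_sub hf he1 f1 f1'.
have hn2 := idem_sub hf he2 f2 f2'.
have o1 := iso_orth hf he1 f1 f1'.
have o2 := iso_orth hf he2 f2 f2'.
have q : mod_iso (PE (g * c)) (PE (c * g)).
  apply: (iso_equiv (x := c) (y := g)) => //; by rewrite ?mulrA ?hcgc ?hgcg.
have h : mod_iso (PE (f - g * c) * PE (g * c))%type (PE (f - c * g) * PE (g * c))%type.
  apply: iso_trans (iso_comm _ _) _.
  apply: iso_trans (iso_sym o1) _.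
  apply: iso_trans o2 _.
  apply: iso_trans (iso_prod (iso_sym q) (iso_refl _)) _.
  exact: iso_comm.
have rC : retr (PE (g * c)) (PE f).
  exact: retr_trans (retr_fst _ _) (iso_retr (iso_sym o1)).
have [m rm] := pw_retr hn1 hf s1.
have [m' rm'] := pw_retr hn2 hf s2.
have AB := canc sepR (fgp_PE hn1) (fgp_PE hn2) h (retr_trans rC rm) (retr_trans rC rm').
exact: iso_extract hn1 hn2 AB.
Qed.

End PEsec.
End Mods.



Lemma unit_lemma (R : pzRingType) (f c g U V : R) :
  f * f = f -> f * c = c -> c * f = c -> f * g = g -> g * f = g ->
  c * g * c = c -> g * c * g = g ->
  (f - c * g) * U = U -> U * (f - g * c) = U -> (f - g * c) * V = V ->
  V * (f - c * g) = V -> V * U = f - g * c -> U * V = f - c * g ->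
  (g + V + (1 - f)) * (c + U + (1 - f)) = 1 /\
  (c + U + (1 - f)) * (g + V + (1 - f)) = 1 /\
  (c + (1 - f)) * (g + V + (1 - f)) * (c + (1 - f)) = c + (1 - f).
Proof.
move=> hf fc cf fg gf cgc gcg hU1 hU2 hV1 hV2 hVU hUV.
have fcg : f * (f - c * g) = f - c * g by rewrite mulrBr hf mulrA fc.
have fgc : f * (f - g * c) = f - g * c by rewrite mulrBr hf mulrA fg.
have cgf : (f - c * g) * f = f - c * g by rewrite mulrBl hf -mulrA gf.
have gcf : (f - g * c) * f = f - g * c by rewrite mulrBl hf -mulrA cf.
have fU : f * U = U by rewrite -hU1 mulrA fcg.
have Uf : U * f = U by rewrite -hU2 -mulrA gcf.
have fV : f * V = V by rewrite -hV1 mulrA fgc.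
have Vf : V * f = V by rewrite -hV2 -mulrA cgf.
have gU : g * U = 0 by rewrite -hU1 mulrA mulrBr gf mulrA gcg subrr mul0r.
have Ug : U * g = 0 by rewrite -hU2 -mulrA mulrBl fg gcg subrr mulr0.
have Vc : V * c = 0 by rewrite -hV2 -mulrA mulrBl fc cgc subrr mulr0.
have cV : c * V = 0 by rewrite -hV1 mulrA mulrBr cf mulrA cgc subrr mul0r.
have Z1 (x : R) : x * f = x -> x * (1 - f) = 0 by move=> h; rewrite mulrBr mulr1 h subrr.
have Z2 (x : R) : f * x = x -> (1 - f) * x = 0 by move=> h; rewrite mulrBl mul1r h subrr.
have I1 : (1 - f) * (1 - f) = 1 - f by rewrite mulrBr mulr1 mulrBl mul1r hf subrr subr0.
have gF := Z1 g gf; have VF := Z1 V Vf; have cF := Z1 c cf; have UF := Z1 U Uf.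
have Fc := Z2 c fc; have FU := Z2 U fU; have Fg := Z2 g fg; have FV := Z2 V fV.
clear Z1 Z2; move: gF VF cF UF Fc FU Fg FV I1; set F := 1 - f => gF VF cF UF Fc FU Fg FV I1.
have EF : F = 1 - f by []. clearbody F.
split; [|split].
- rewrite !mulrDl !mulrDr gU Vc hVU gF VF Fc FU I1 !addr0 !add0r.
  by rewrite EF (addrC (g * c)) subrK addrC subrK.
- rewrite !mulrDl !mulrDr cV Ug hUV cF UF Fg FV I1 !addr0 !add0r.
  by rewrite EF (addrC (c * g)) subrK addrC subrK.
- have -> : (c + F) * (g + V + F) = c * g + F.
    by rewrite !mulrDl !mulrDr cV cF Fg FV I1 !addr0 !add0r.
  by rewrite mulrDl !mulrDr cgc -mulrA gF mulr0 Fc I1 addr0 add0r.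
Qed.

Section Help.
Variable R : pzRingType.
Implicit Types f c g b k q t : R.

Lemma L_reflex c g : c * g * c = c ->
  c * (g * c * g) * c = c /\ (g * c * g) * c * (g * c * g) = g * c * g.
Proof.
move=> h; split; first by rewrite !mulrA h h.
transitivity (g * (c * g * c) * g * c * g); first by rewrite !mulrA.
rewrite h; transitivity (g * (c * g * c) * g); first by rewrite !mulrA.
by rewrite h.
Qed.

Lemma L_corner f c b : f * f = f -> f * c = c * f -> c * b * c = c ->
  (f * c) * (f * b * f) * (f * c) = f * c.
Proof.
move=> hf fc h.
have h1 : f * c * f = f * c by rewrite fc -mulrA hf -fc.
have h2 : f * (f * c) = c * f by rewrite mulrA hf fc.
transitivity ((f * c * f) * b * (f * (f * c))); first by rewrite !mulrA.
rewrite h1 h2; transitivity (f * (c * b * c) * f); first by rewrite !mulrA.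
by rewrite h h1.
Qed.

Lemma L_kerR f q t : f * f = f -> (1 + f * q * f) * t = 0 -> f * t = t.
Proof.
move=> hf h.
have ht : t = - (f * q * f * t).
  by move: h; rewrite mulrDl mul1r => /eqP; rewrite addr_eq0 => /eqP.
by rewrite ht mulrN !mulrA hf.
Qed.

Lemma L_kerL f q t : f * f = f -> t * (1 + f * q * f) = 0 -> t * f = t.
Proof.
move=> hf h.
have ht : t = - (t * (f * q * f)).
  by move: h; rewrite mulrDr mulr1 => /eqP; rewrite addr_eq0 => /eqP.
by rewrite ht mulNr -!mulrA hf.
Qed.

Lemma L_triang f k : f * f = f -> f * k = k ->
  (1 - f * k * (1 - f)) * (1 + f * k * (1 - f)) = 1 /\
  (1 + f * k * (1 - f)) * (1 - f * k * (1 - f)) = 1 /\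
  (1 - f * k * (1 - f)) * (1 + k) = 1 + f * k * f.
Proof.
move=> hf hk.
have fk0 : (1 - f) * k = 0 by rewrite mulrBl mul1r hk subrr.
have f1f : (1 - f) * f = 0 by rewrite mulrBl mul1r hf subrr.
set b := f * k * (1 - f).
have bb : b * b = 0 by rewrite /b -!mulrA (mulrA (1 - f) f) f1f mul0r !mulr0.
have bk : b * k = 0 by rewrite /b -mulrA fk0 mulr0.
have bdef : b = k - f * k * f by rewrite /b mulrBr mulr1 hk.
clearbody b.
split; [|split].
- by rewrite mulrBl mul1r mulrDr mulr1 bb addr0 addrK.
- by rewrite mulrDl mul1r mulrBr mulr1 bb subr0 subrK.
- rewrite mulrBl mul1r mulrDr mulr1 bk addr0 bdef opprB.
  by rewrite addrCA addrK addrC.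
Qed.
End Help.



Unset Implicit Arguments.
Theorem corollary2p6 (R : pzRingType) (a : R) :
  separative R -> exchange_ring R -> is_unit (2%:R : R) ->
  regular (a - a ^+ 3) ->
  (forall z : R, ideal_gen (fun w : R => w = 1 - a ^+ 2) z <->
     (ideal_gen (rann a) z /\ ideal_gen (lann a) z)) ->
  unit_regular a.
Proof.
move=> sepR exR [w [h2w hw2]] [d0 hd] hI.
set d := a - a ^+ 3 in hd.
have wc r : w * r = r * w.
  have h2 : 2%:R * r = r * 2%:R by rewrite mulr_natl mulr_natr.
  by rewrite -[LHS]mulr1 -h2w mulrA -(mulrA w r) -h2 mulrA hw2 mul1r.
set y := 1 - a ^+ 2.
have hay : a * y = d by rewrite /y mulrBr mulr1 -exprS.
have hya : y * a = d by rewrite /y mulrBl mul1r -exprSr.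
have ydef : y = 1 - a ^+ 2 by [].
have ddef : d = a - a ^+ 3 by [].
clearbody y d.
set be := a + y * d0 * y.
have hbe : a * be * a = a.
  rewrite /be mulrDr mulrDl !mulrA hay -(mulrA (d * d0)) hya -hd.
  by rewrite -expr2 -exprSr ddef addrC subrK.
have ww p q : (w * p) * (w * q) = w * w * (p * q).
  by rewrite -mulrA (mulrA p) -(wc p) -(mulrA w p) mulrA.
have wwc z : w * w * z = z * (w * w).
  by rewrite -mulrA wc wc -mulrA.
have two : (2%:R : R) = 1 + 1 by rewrite mulr2n.
have [e [he [[r er] [s es]]]] := exR (w * (1 + a)).
set x := w * (1 + a) in er es.
have hx1 : 1 - x = w * (1 - a).
  by rewrite -{1}hw2 /x -mulrBr two opprD addrA addrK.
have hxx : x + x = 1 + a.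
  by rewrite /x -mulrDl -mulr2n -mulr_natr hw2 mul1r.
have hy1 : (1 + a) * (1 - a) = y.
  by rewrite ydef mulrDl mul1r mulrBr mulr1 -expr2 addrA subrK.
have hy2 : (1 - a) * (1 + a) = y.
  by rewrite ydef mulrBl mul1r mulrDr mulr1 -expr2 opprD addrA addrK.
have xx1 : x * (1 - x) = w * w * y by rewrite hx1 /x ww hy1.
have xx2 : (1 - x) * x = w * w * y by rewrite hx1 /x ww hy2.
set t1 := w * w * (r - s).
have hex : e - x = y * t1.
  have -> : e - x = (1 - x) * e - x * (1 - e).
    by rewrite mulrBl mul1r mulrBr mulr1 opprB addrA subrK.
  by rewrite {1}er es -/x (mulrA (1 - x)) xx2 (mulrA x) xx1 -mulrBr wwc -mulrA.
set u := e - (1 - e).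
have he1 : e * (1 - e) = 0 by rewrite mulrBr mulr1 he subrr.
have he2 : (1 - e) * e = 0 by rewrite mulrBl mul1r he subrr.
have he3 : (1 - e) * (1 - e) = 1 - e by rewrite mulrBl mul1r he1 subr0.
have huu : u * u = 1.
  rewrite /u; move: he1 he2 he3; set E := 1 - e => he1 he2 he3.
  have EE : E = 1 - e by [].
  clearbody E.
  by rewrite mulrBl !mulrBr he he1 he2 he3 subr0 sub0r opprK EE addrC subrK.
have ha : a = x + x - 1 by rewrite hxx addrC addKr.
set t0 := t1 + t1.
have hua : u - a = y * t0.
  rewrite /t0 mulrDr -hex ha /u opprB opprB (addrA e) (addrA (e + e - 1)) subrK.
  by rewrite opprD addrACA.
set hh := 1 + a * d0 * a ^+ 2.
have a2y : a ^+ 2 * y = d * a.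
  by rewrite expr2 -mulrA hay -{1}hya mulrA hay.
have hy : y * hh * y = y.
  have ad : a * d = d * a by rewrite -{1}hya mulrA hay.
  rewrite /hh mulrDr mulr1 mulrDl !mulrA hya -(mulrA (d * d0 * a) a y) hay.
  rewrite -(mulrA (d * d0)) ad mulrA -hd -hya.
  by rewrite -mulrA -expr2 -mulrDr ydef subrK mulr1.
set p := y * hh.
have hp : p * p = p by rewrite /p mulrA hy.
have hpy : p * y = y by rewrite /p hy.
have pdef : p = y * hh by [].
clearbody p.
have conj q q' : (u * q * u) * (u * q' * u) = u * (q * q') * u.
  by rewrite -!mulrA (mulrA u u) huu mul1r.
set f := u * p * u.
have hf : f * f = f by rewrite /f conj hp.
have fdef : f = u * p * u by [].
clearbody f.
set k := u * a - 1.
have hk : k = - (u * (y * t0)).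
  by rewrite /k -hua mulrBr huu opprB.
have hfk : f * k = k.
  by rewrite hk mulrN fdef -!mulrA (mulrA u u) huu mul1r (mulrA p y) hpy.
have kdef : u * a = 1 + k by rewrite /k addrC subrK.
clearbody k.
have hIf : ideal_gen (fun w : R => w = 1 - a ^+ 2) f.
  exists 1%N, (fun _ => u), (fun _ => y), (fun _ => hh * u); split => //.
  by rewrite big_ord1 fdef pdef !mulrA.
have [Ir Il] := (hI f).1 hIf.
have [TT1 [TT2 TT3]] := L_triang hf hfk.
set T := (1 - f * k * (1 - f)) * u.
set Ti := u * (1 + f * k * (1 - f)).
set cp := 1 + f * k * f.
have hTa : T * a = cp by rewrite /T -mulrA kdef TT3.
have TTi : T * Ti = 1 by rewrite /T /Ti -mulrA (mulrA u u) huu mul1r TT1.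
have TiT : Ti * T = 1 by rewrite /T /Ti -mulrA (mulrA _ _ u) TT2 mul1r huu.
clearbody T Ti.
have hTia : Ti * cp = a by rewrite -hTa mulrA TiT mul1r.
have cpdef : cp = 1 + f * k * f by [].
clearbody cp.
set b2 := be * Ti.
have hcp : cp * b2 * cp = cp.
  rewrite -hTa /b2; transitivity (T * (a * be * (Ti * T) * a)); first by rewrite !mulrA.
  by rewrite TiT mulr1 hbe.
have fcp : f * cp = cp * f.
  by rewrite cpdef mulrDr mulrDl mulr1 mul1r !mulrA hf -(mulrA (f * k) f f) hf.
set cf := f * cp.
have cfdef : cf = f * cp by [].
have cfdef' : cf = f + f * k * f by rewrite cfdef cpdef mulrDr mulr1 !mulrA hf.
clearbody cf.
set ga := f * b2 * f.
have hcgc : cf * ga * cf = cf by rewrite cfdef /ga; exact: L_corner hf fcp hcp.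
have [r1 r2] := L_reflex hcgc.
set g1 := ga * cf * ga in r1 r2.
have fc1 : f * cf = cf by rewrite cfdef mulrA hf.
have fc2 : cf * f = cf by rewrite cfdef -mulrA -fcp mulrA hf.
have fg1 : f * g1 = g1 by rewrite /g1 /ga !mulrA hf.
have fg2 : g1 * f = g1 by rewrite /g1 /ga !mulrA -(mulrA _ f f) hf.
clearbody g1.
have hR t : a * t = 0 -> (f - g1 * cf) * t = t.
  move=> ht.
  have h1 : cp * t = 0 by rewrite -hTa -mulrA ht mulr0.
  have h2 : f * t = t by apply: (L_kerR (q := k) hf); rewrite -cpdef.
  have h3 : cf * t = 0 by rewrite cfdef -mulrA h1 mulr0.
  by rewrite mulrBl h2 -mulrA h3 mulr0 subr0.
have hL t : t * a = 0 -> t * Ti * (f - cf * g1) = t * Ti.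
  move=> ht.
  have h1 : t * Ti * cp = 0 by rewrite -mulrA hTia.
  have h2 : t * Ti * f = t * Ti by apply: (L_kerL (q := k) hf); rewrite -cpdef.
  have h3 : t * Ti * cf = 0 by rewrite cfdef fcp mulrA h1 mul0r.
  by rewrite mulrBr h2 mulrA h3 mul0r subr0.
have [n [xs [ts [ys [hts hsum]]]]] := Ir.
have [n' [xs' [ts' [ys' [hts' hsum']]]]] := Il.
have sR : f = \sum_(i < n) xs i * (f - g1 * cf) * (ts i * ys i).
  rewrite {1}hsum; apply: eq_bigr => i _.
  by symmetry; rewrite mulrA -(mulrA (xs i)) (hR _ (hts i)).
have sL : f = \sum_(i < n') (xs' i * (ts' i * Ti)) * (f - cf * g1) * (T * ys' i).
  rewrite {1}hsum'; apply: eq_bigr => i _.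
  symmetry; rewrite -(mulrA (xs' i)) (hL _ (hts' i)) !mulrA -(mulrA (xs' i * ts' i) Ti T) TiT.
  by rewrite mulr1.
have [U [V [hU1 [hU2 [hV1 [hV2 [hVU hUV]]]]]]] :=
  key sepR hf fc1 fc2 fg1 fg2 r1 r2 sR sL.
have [W1 [W2 W3]] := unit_lemma hf fc1 fc2 fg1 fg2 r1 r2 hU1 hU2 hV1 hV2 hVU hUV.
have cpeq : cf + (1 - f) = cp.
  by rewrite cfdef' cpdef addrC addrA subrK.
rewrite cpeq in W3.
exists ((g1 + V + (1 - f)) * T); split.
  exists (Ti * (cf + U + (1 - f))); split.
  - by rewrite -mulrA (mulrA T Ti) TTi mul1r W1.
  - by rewrite -mulrA (mulrA _ _ T) W2 mul1r TiT.
rewrite -hTia !mulrA -(mulrA (Ti * cp * (g1 + V + (1 - f))) T Ti) TTi mulr1.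
by rewrite -(mulrA Ti cp) -mulrA W3.
Qed.
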